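(* Let $\phi$ be an instance of MonLinNAE3SAT, and let $\mathcal{G}$ be the lifetime-1 temporal graph constructed from $\phi$, with sources $s$ and $s'$. If $\phi$ is satisfiable in the not-all-equal sense, then the minimum value of a solution of \textsc{ReachFast} on $\mathcal{G}$ with sources $\{s,s'\}$ equals $6$.
   Context: MonLinNAE3SAT instance: a CNF formula $\phi$ on variables $x_1,\dots,x_n$ with clauses $c_1,\dots,c_m$. Every clause has exactly three distinct literals, every variable appears exactly four times, there are no negations, and any two clauses share at most one variable. The formula is NAE-satisfiable if some truth assignment makes, in every clause, at least one literal true and at least one literal false. Construction of $\mathcal{G}$. All edges have the single label $1$ (lifetime $1$). The vertices and edges are as follows. - Sources $s,s'$. - For each clause $c_j$: vertices $a_j,a'_j,z_j,z'_j$ and edges $sa_j$, $s'a'_j$, $a_jz_j$, $a'_jz'_j$. - For each variable $x_i$: vertices $b_i,b'_i,w_i$ and edges $b_iw_i$, $w_ib'_i$. - If $x_i$ appears in $c_j$: edges $a_jb_i$ and $a'_jb'_i$. - If $x_i$ and $x_k$ appear in a common clause: edges $b_ib_k$, $b'_ib'_k$, $w_iw_k$. - A ladder on vertices $p_1,\dots,p_5,q_1,\dots,q_5$ with edges $sp_1$, $sq_1$, $s'p_5$, $s'q_5$, $p_ip_{i+1}$ and $q_iq_{i+1}$ for $i\in[4]$, and $p_iq_i$ for $i\in[5]$. Temporal graph notions. A temporal graph has edge sets $E_1,\dots,E_{t_{\max}}$, and an edge has label $i$ if it lies in $E_i$. A temporal path uses edges with strictly increasing labels; its arrival time is its last label.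 $\mathrm{reachtime}(v,\cdot)$ is the least $t$ such that $v$ reaches every vertex by time $t$. Delaying a label $i$ by a positive integer $\delta$ replaces it by $i+\delta$. A solution for sources $S$ is a temporal graph obtained by delaying labels in which every source reaches every vertex; its value is $\max_{v\in S}\mathrm{reachtime}(v,\cdot)$. *)

(* Defs.v *)
From mathcomp Require Import all_boot.
Set Implicit Arguments. Unset Strict Implicit. Unset Printing Implicit Defensive.

(* A formula on variables x_0..x_{n-1} with clauses c_0..c_{m-1};
   clause j consists of the three (monotone) literals cl j 0, cl j 1, cl j 2. *)

Definition occurs n m (cl : 'I_m -> 'I_3 -> 'I_n) (i : 'I_n) (j : 'I_m) : bool :=
  [exists k, cl j k == i].

Definition is_MonLinNAE3SAT n m (cl : 'I_m -> 'I_3 -> 'I_n) : Prop :=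
  (forall j, injective (cl j)) /\
  (forall i, #|[set p : 'I_m * 'I_3 | cl p.1 p.2 == i]| = 4) /\
  (forall j j', j != j' -> #|[set i | occurs cl i j && occurs cl i j']| <= 1).

Definition NAE_satisfiable n m (cl : 'I_m -> 'I_3 -> 'I_n) : Prop :=
  exists a : 'I_n -> bool,
    forall j, (exists k, a (cl j k)) /\ (exists k, ~~ a (cl j k)).

Inductive vertex (n m : nat) : Type :=
| vs | vs'
| va of 'I_m | va' of 'I_m | vz of 'I_m | vz' of 'I_m
| vb of 'I_n | vb' of 'I_n | vw of 'I_n
| vp of 'I_5 | vq of 'I_5.

Arguments vs {n m}. Arguments vs' {n m}.

Definition edge0 n m (cl : 'I_m -> 'I_3 -> 'I_n) (x y : vertex n m) : Prop :=
  match x, y with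
  | vs, va j => True
  | vs', va' j => True
  | va j, vz j' => j = j'
  | va' j, vz' j' => j = j'
  | vb i, vw i' => i = i'
  | vw i, vb' i' => i = i'
  | va j, vb i => occurs cl i j
  | va' j, vb' i => occurs cl i j
  | vb i, vb k => i <> k /\ exists j, occurs cl i j && occurs cl k j
  | vb' i, vb' k => i <> k /\ exists j, occurs cl i j && occurs cl k j
  | vw i, vw k => i <> k /\ exists j, occurs cl i j && occurs cl k j
  (* ladder p_1..p_5, q_1..q_5 (indices shifted to 0..4) *)
  | vs, vp k => val k = 0
  | vs, vq k => val k = 0
  | vs', vp k => val k = 4
  | vs', vq k => val k = 4
  | vp k, vp k' => val k' = (val k).+1
  | vq k, vq k' => val k' = (val k).+1
  | vp k, vq k' => k = k'
  | _, _ => False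
  end.

Definition adjG n m (cl : 'I_m -> 'I_3 -> 'I_n) (x y : vertex n m) : Prop :=
  edge0 cl x y \/ edge0 cl y x.

(* A lifetime-1 temporal graph on vertex type V: adjacency relation adj, and
   each edge {x,y} carries the single label lab x y (lab symmetric). *)

Fixpoint tw (V : Type) (adj : V -> V -> Prop) (lab : V -> V -> nat)
    (x : V) (prev : nat) (p : seq V) (t : nat) : Prop :=
  match p with
  | [::] => True
  | y :: p' => adj x y /\ prev < lab x y /\ lab x y <= t /\ tw adj lab y (lab x y) p' t
  end.

(* u reaches w by time t via a temporal path (the trivial path has arrival 0) *)
Definition reaches_by (V : Type) (adj : V -> V -> Prop) (lab : V -> V -> nat)
    (u w : V) (t : nat) : Prop :=
  exists p : seq V, tw adj lab u 0 p t /\ last u p = w.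

Definition reaches_all_by V adj (lab : V -> V -> nat) (v : V) t : Prop :=
  forall w, reaches_by adj lab v w t.

Definition is_reachtime V adj (lab : V -> V -> nat) (v : V) (t : nat) : Prop :=
  reaches_all_by adj lab v t /\ forall t', reaches_all_by adj lab v t' -> t <= t'.

(* Delaying: starting from all labels equal to 1, edge {x,y} is delayed by
   d x y >= 0 (0 = not delayed); d must be symmetric (one delay per edge). *)
Definition delayed_label V (d : V -> V -> nat) (x y : V) : nat := 1 + d x y.

Definition valid_delay V (d : V -> V -> nat) : Prop := forall x y, d x y = d y x.

Definition is_solution V adj (S : V -> Prop) (d : V -> V -> nat) : Prop :=
  valid_delay d /\
  forall v, S v -> forall w, exists t, reaches_by adj (delayed_label d) v w t.

Definition solution_value V adj (S : V -> Prop) (d : V -> V -> nat) (k : nat) : Prop :=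
  (forall v, S v -> exists t, is_reachtime adj (delayed_label d) v t /\ t <= k) /\
  (exists v, S v /\ is_reachtime adj (delayed_label d) v k).

Definition reachfast_min V adj (S : V -> Prop) (k : nat) : Prop :=
  (exists d, is_solution adj S d /\ solution_value adj S d k) /\
  (forall d k', is_solution adj S d -> solution_value adj S d k' -> k <= k').

Definition sources_ss' n m (v : vertex n m) : Prop := v = vs \/ v = vs'.

(* Main.v *)
Require Import Defs.
From mathcomp Require Import all_boot zify.
From Stdlib Require Classical_Prop.

Arguments va {n m}. Arguments va' {n m}. Arguments vz {n m}. Arguments vz' {n m}.
Arguments vb {n m}. Arguments vb' {n m}. Arguments vw {n m}. Arguments vp {n m}. Arguments vq {n m}.
Section S.
Variables (n m : nat) (cl : 'I_m -> 'I_3 -> 'I_n).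
Local Notation V := (vertex n m).

Definition rung (k : nat) : nat := nth 0 [:: 5; 4; 3; 4; 5] k.

Definition labd (a : 'I_n -> bool) (x y : V) : nat :=
  match x, y with
  | va j, vz j' => 5
  | va' j, vz' j' => 5
  | va j, vb i => if a i then 1 else 4
  | va' j, vb' i => if a i then 4 else 1
  | vb i, vw k => if a i then 2 else 3
  | vw k, vb' i => if a i then 3 else 2
  | vb i, vb k => 4
  | vb' i, vb' k => 4
  | vw i, vw k => 3
  | vs', vp k => 5
  | vs, vq k => 5
  | vp k, vp k' => if val k' == (val k).+1 then (val k).+1 else 0
  | vq k, vq k' => if val k' == (val k).+1 then 4 - val k else 0
  | vp k, vq k' => if val k == val k' then rung (val k) else 0
  | _, _ => 0
  end.

Definition dl a (x y : V) := maxn (labd a x y) (labd a y x).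

Definition sig (x : V) : V :=
  match x with
  | vs => vs' | vs' => vs
  | va j => va' j | va' j => va j
  | vz j => vz' j | vz' j => vz j
  | vb i => vb' i | vb' i => vb i | vw i => vw i
  | vp k => vq (rev_ord k) | vq k => vp (rev_ord k)
  end.

Lemma sigK x : sig (sig x) = x.
Proof. by case: x => //= k; rewrite rev_ordK. Qed.

Ltac ord5 k := let Hk := fresh in case: k => [[|[|[|[|[|k]]]]] Hk] //.

Lemma dl_sig a x y : dl (fun i => ~~ a i) x y = dl a (sig x) (sig y).
Proof.
case: x; case: y => *; rewrite /dl /= ?maxn0 ?max0n //;
  repeat match goal with |- context [a ?i] => case: (a i) end => //;
  repeat match goal with k : 'I_5 |- _ => ord5 k end.
Qed.

Lemma adj_sig x y : adjG cl x y -> adjG cl (sig x) (sig y).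
Proof.
rewrite /adjG.
case: x; case: y => //= *; try tauto;
  repeat match goal with H : _ \/ _ |- _ => case: H => H end;
  try discriminate; try tauto; try (subst; tauto);
  repeat match goal with k : 'I_5 |- _ => lazymatch goal with _ : is_true (nat_of_ord k < 5) |- _ => fail | _ => pose proof (ltn_ord k) end end; lia.
Qed.


Definition D (x : V) : nat :=
  match x with
  | vs => 6 | vs' => 0 | va _ => 5 | va' _ => 1 | vz _ => 6 | vz' _ => 2
  | vb _ => 4 | vb' _ => 2 | vw _ => 3 | vp k => 5 - val k | vq k => 5 - val k
  end.

Lemma D_adj x y : adjG cl x y -> D x <= D y + 1.
Proof.
rewrite /adjG.
case: x; case: y => //= *;
  repeat match goal with H : _ \/ _ |- _ => case: H => H end;
  try discriminate; try tauto; try (subst; lia);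
  repeat match goal with k : 'I_5 |- _ => lazymatch goal with _ : is_true (nat_of_ord k < 5) |- _ => fail | _ => pose proof (ltn_ord k) end end; lia.
Qed.

Lemma tw_bound (adj : V -> V -> Prop) (F : V -> nat) (z : V) lab :
  F z = 0 -> (forall x y, adj x y -> F x <= F y + 1) ->
  forall p x prev t, tw adj lab x prev p t -> last x p = z -> x <> z -> prev + F x <= t.
Proof.
move=> Fz Fadj; elim=> [|y p IH] x prev t /=; first by move=> _ ->.
move=> [Hxy [Hl [Hlt Htw]]] Hlast Hxz.
have := Fadj _ _ Hxy.
case: (Classical_Prop.classic (y = z)) => [->|Hyz].
  rewrite Fz => H; lia.
move: (IH _ _ _ Htw Hlast Hyz) => H1 H2; lia.
Qed.

Lemma tw_map (adj : V -> V -> Prop) (f : V -> V) lab1 lab2 :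
  (forall x y, adj x y -> adj (f x) (f y)) ->
  (forall x y, lab2 (f x) (f y) = lab1 x y) ->
  forall p x prev t, tw adj lab1 x prev p t -> tw adj lab2 (f x) prev (map f p) t.
Proof.
move=> Ha Hl; elim=> [|y p IH] x prev t //= [H1 [H2 [H3 H4]]].
rewrite Hl; split; first exact: Ha.
by split => //; split => //; exact: IH.
Qed.


Lemma occ_cl j k : occurs cl (cl j k) j.
Proof. by apply/existsP; exists k. Qed.

Ltac adjt := rewrite /adjG /=; first [left; simpl; solve [auto] | right; simpl; solve [auto]].

Ltac pathchk := split; [ rewrite /= /delayed_label /dl /=;
  repeat match goal with H : ?f (?x : 'I_n) = ?b |- _ => lazymatch b with true => rewrite H /= | false => rewrite H /= end end;
  repeat split; try adjt | done ].

Lemma reach_s (a : 'I_n -> bool) :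
  (forall i, exists j, occurs cl i j) ->
  (forall j, (exists k, a (cl j k)) /\ (exists k, ~~ a (cl j k))) ->
  forall w, reaches_by (adjG cl) (delayed_label (dl a)) vs w 6.
Proof.
move=> occ nae w.
have partner : forall i, exists j i', occurs cl i j /\ occurs cl i' j /\ a i' = ~~ a i.
  move=> i; case: (occ i) => j Hj; case: (nae j) => [[k1 H1] [k2 H2]].
  case Hai: (a i).
    exists j, (cl j k2); split => //; split; first exact: occ_cl.
    by move: H2; case: (a _).
  exists j, (cl j k1); split => //; split; first exact: occ_cl.
  by move: H1; case: (a _).
case: w.
- by exists [::].
- exists [:: vp (@Ordinal 5 0 isT); vp (@Ordinal 5 1 isT); vp (@Ordinal 5 2 isT);
            vp (@Ordinal 5 3 isT); vp (@Ordinal 5 4 isT); vs']. pathchk.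
- move=> j; exists [:: va j]; pathchk.
- move=> j; case: (nae j) => [[k Hk] _]; set i := cl j k.
  have Ha : a i = true by [].
  have Ho := occ_cl j k.
  exists [:: va j; vb i; vw i; vb' i; va' j]; pathchk.
- move=> j; exists [:: va j; vz j]; pathchk.
- move=> j; case: (nae j) => [[k Hk] _]; set i := cl j k.
  have Ha : a i = true by [].
  have Ho := occ_cl j k.
  exists [:: va j; vb i; vw i; vb' i; va' j; vz' j]; pathchk.
- move=> i; case: (occ i) => j Hj; case Ha: (a i).
    exists [:: va j; vb i]; pathchk.
  exists [:: va j; vb i]; pathchk.
- move=> i; case: (occ i) => j Hj; case Ha: (a i).
    exists [:: va j; vb i; vw i; vb' i]; pathchk.
  case: (partner i) => j' [i' [Hj1 [Hj2 Hi']]]; rewrite Ha /= in Hi'.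
  have Hne : i' <> i by move=> E; rewrite E Ha in Hi'.
  have Hbb : i' <> i /\ exists j, occurs cl i' j && occurs cl i j by split => //; exists j'; rewrite Hj1 Hj2.
  exists [:: va j'; vb i'; vw i'; vb' i'; vb' i]; pathchk.
- move=> i; case: (occ i) => j Hj; case Ha: (a i).
    exists [:: va j; vb i; vw i]; pathchk.
  case: (partner i) => j' [i' [Hj1 [Hj2 Hi']]]; rewrite Ha /= in Hi'.
  have Hne : i' <> i by move=> E; rewrite E Ha in Hi'.
  have Hbb : i' <> i /\ exists j, occurs cl i' j && occurs cl i j by split => //; exists j'; rewrite Hj1 Hj2.
  exists [:: va j'; vb i'; vw i'; vw i]; pathchk.
- case=> [[|[|[|[|[|k]]]]] Hk] //.
  + exists [:: vp (Ordinal Hk)]; pathchk.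
  + exists [:: vp (@Ordinal 5 0 isT); vp (Ordinal Hk)]; pathchk.
  + exists [:: vp (@Ordinal 5 0 isT); vp (@Ordinal 5 1 isT); vp (Ordinal Hk)]; pathchk.
  + exists [:: vp (@Ordinal 5 0 isT); vp (@Ordinal 5 1 isT); vp (@Ordinal 5 2 isT); vp (Ordinal Hk)]; pathchk.
  + exists [:: vp (@Ordinal 5 0 isT); vp (@Ordinal 5 1 isT); vp (@Ordinal 5 2 isT); vp (@Ordinal 5 3 isT); vp (Ordinal Hk)]; pathchk.
- case=> [[|[|[|[|[|k]]]]] Hk] //.
  + exists [:: vq (Ordinal Hk)]; pathchk.
  + exists [:: vp (@Ordinal 5 0 isT); vp (Ordinal Hk); vq (Ordinal Hk)]; pathchk.
  + exists [:: vp (@Ordinal 5 0 isT); vp (@Ordinal 5 1 isT); vp (Ordinal Hk); vq (Ordinal Hk)]; pathchk.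
  + exists [:: vp (@Ordinal 5 0 isT); vp (@Ordinal 5 1 isT); vp (@Ordinal 5 2 isT); vp (Ordinal Hk); vq (Ordinal Hk)]; pathchk.
  + exists [:: vp (@Ordinal 5 0 isT); vp (@Ordinal 5 1 isT); vp (@Ordinal 5 2 isT); vp (@Ordinal 5 3 isT); vp (Ordinal Hk); vq (Ordinal Hk)]; pathchk.
Qed.

End S.

Arguments D {n m}. Arguments dl {n m}. Arguments sig {n m}.
Lemma lb n m (cl : 'I_m -> 'I_3 -> 'I_n) lab (v : vertex n m) t :
  sources_ss' v -> reaches_all_by (adjG cl) lab v t -> 6 <= t.
Proof.
case=> -> H.
- case: (H vs') => p [Htw Hl].
  have := @tw_bound _ _ (adjG cl) D vs' lab erefl (@D_adj _ _ cl) _ _ _ _ Htw Hl; apply => //.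
- case: (H vs) => p [Htw Hl].
  have := @tw_bound _ _ (adjG cl) (fun x => D (sig x)) vs lab erefl
    (fun x y h => @D_adj _ _ cl _ _ (@adj_sig _ _ cl _ _ h)) _ _ _ _ Htw Hl; apply => //.
Qed.

Theorem lemma1 (n m : nat) (cl : 'I_m -> 'I_3 -> 'I_n) :
  is_MonLinNAE3SAT cl ->
  NAE_satisfiable cl ->
  reachfast_min (adjG cl) (@sources_ss' n m) 6.
Proof.
move=> [_ [H4 _]] [a nae].
have occ : forall i, exists j, occurs cl i j.
  move=> i; have : 0 < #|[set p : 'I_m * 'I_3 | cl p.1 p.2 == i]| by rewrite H4.
  case/card_gt0P => p; rewrite inE => /eqP E; exists p.1; apply/existsP; exists p.2; by rewrite E.
have nae' : forall j, (exists k, ~~ a (cl j k)) /\ (exists k, ~~ ~~ a (cl j k)).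
  move=> j; case: (nae j) => [[k1 H1] [k2 H2]]; split; [exists k2 | exists k1; rewrite negbK] => //.
have Rs := @reach_s _ _ cl a occ nae.
have Rs' : forall w, reaches_by (adjG cl) (delayed_label (dl a)) vs' w 6.
  move=> w; case: (@reach_s _ _ cl (fun i => ~~ a i) occ nae' (sig w)) => p [Htw Hl].
  exists (map sig p); split.
    apply: (@tw_map n m (adjG cl) sig (delayed_label (dl (fun i => ~~ a i))) _ _ _ _ _ _ _ Htw).
      by move=> x y; apply: (@adj_sig _ _ cl).
    by move=> x y; rewrite /delayed_label (@dl_sig n m).
  by have -> : (vs' : vertex n m) = sig vs by []; rewrite (last_map sig) Hl sigK.
have RA : forall v, sources_ss' v -> reaches_all_by (adjG cl) (delayed_label (dl a)) v 6.
  by move=> v [->|->].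
split.
- exists (dl a); split.
  + split; first by move=> x y; rewrite /dl maxnC.
    by move=> v Sv w; exists 6; apply: RA.
  + split.
      move=> v Sv; exists 6; split => //; split; first exact: RA.
      by move=> t' Ht'; apply: lb Sv Ht'.
    exists vs; split; first by left.
    split; first by apply: RA; left.
    by move=> t' Ht'; apply: (@lb _ _ cl _ vs); first left.
- move=> d k' _ [_ [v [Sv [Hr _]]]]; exact: lb Sv Hr.
Qed.
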